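(* Let $x\in\mathbb{R}_+^n$ and let $\mathrm{IC}(\mathbf{a}_0,\dots,\mathbf{a}_{n-1})$ be an interval circulant matrix containing $\hat A$. Then there exists $A\in\mathrm{IC}(\mathbf{a}_0,\dots,\mathbf{a}_{n-1})$ with $x\in\mathrm{Attr}(A)$ if and only if $x\in\mathrm{Attr}(\hat A)$.
   Context: Max algebra on $\mathbb{R}_+$: $\oplus=\max$, ordinary product; $\lambda(A)$ greatest max-algebraic eigenvalue (maximum cycle geometric mean); $\mathrm{Attr}(A)=\{x\in\mathbb{R}_+^n: A^{t+1}\otimes x=\lambda(A)A^t\otimes x\text{ for some }t\ge0\}$. $\mathrm{Circ}(a_0,\dots,a_{n-1})$ has entries $A_{i,j}=a_t$, $t\equiv j-i\pmod n$; $\mathrm{IC}(\mathbf{a}_0,\dots,\mathbf{a}_{n-1})$ is the set of all $\mathrm{Circ}(a_0,\dots,a_{n-1})$ with $a_t\in\mathbf{a}_t$, each $\mathbf{a}_t\subseteq\mathbb{R}_+$ a nonempty interval of one of the forms $[\underline{a}_t,\overline{a}_t]$, $(\underline{a}_t,\overline{a}_t)$, $(\underline{a}_t,\overline{a}_t]$, $[\underline{a}_t,\overline{a}_t)$. $\underline a=\max_k\underline a_k$, $\hat A=\mathrm{Circ}(\hat a_0,\dots,\hat a_{n-1})$, $\hat a_i=\min\{\underline a,\overline a_i\}$. *)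

(* Defs.v *)
(* classical reals R. Indices range over {0,...,n-1} (nat, with
   explicit bounds i < n); matrices are functions nat -> nat -> R and vectors
   nat -> R, only their values at indices < n matter. *)
From Stdlib Require Import Reals Lra Lia List Arith.
Import ListNotations.
Open Scope R_scope.

(* iterated max over the index range 0..n-1 (all quantities here are >= 0,
   so starting the fold at 0 is harmless). *)
Definition bigmax (n : nat) (f : nat -> R) : R :=
  fold_right (fun k acc => Rmax (f k) acc) 0 (seq 0 n).

(* Max-algebra operations (oplus = max, otimes = ordinary product). *)
Definition mmul (n : nat) (A B : nat -> nat -> R) : nat -> nat -> R :=
  fun i j => bigmax n (fun k => A i k * B k j).

Definition mid (i j : nat) : R := if Nat.eqb i j then 1 else 0.

Fixpoint mpow (n : nat) (A : nat -> nat -> R) (t : nat) : nat -> nat -> R :=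
  match t with
  | O => mid
  | S t' => mmul n A (mpow n A t')
  end.

Definition mvec (n : nat) (A : nat -> nat -> R) (x : nat -> R) : nat -> R :=
  fun i => bigmax n (fun j => A i j * x j).

Definition kroot (k : nat) (x : R) : R :=
  if Rle_dec x 0 then 0 else Rpower x (/ INR k).

Fixpoint words (n k : nat) : list (list nat) :=
  match k with
  | O => [[]]
  | S k' => flat_map (fun w => map (fun i => i :: w) (seq 0 n)) (words n k')
  end.

Fixpoint nodupb (l : list nat) : bool :=
  match l with
  | [] => true
  | i :: l' => negb (existsb (Nat.eqb i) l') && nodupb l'
  end.

Definition cycles (n : nat) : list (list nat) :=
  filter nodupb (flat_map (fun k => words n k) (seq 1 n)).

(* weight a_{i1 i2} a_{i2 i3} ... a_{ik i1} of the cycle *)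
Fixpoint path_w (A : nat -> nat -> R) (first : nat) (l : list nat) : R :=
  match l with
  | [] => 1
  | [i] => A i first
  | i :: ((j :: _) as l') => A i j * path_w A first l'
  end.

Definition cycle_w (A : nat -> nat -> R) (c : list nat) : R :=
  match c with
  | [] => 1
  | i :: _ => path_w A i c
  end.

Definition mlambda (n : nat) (A : nat -> nat -> R) : R :=
  fold_right Rmax 0
    (map (fun c => kroot (length c) (cycle_w A c)) (cycles n)).

Definition Attr (n : nat) (A : nat -> nat -> R) (x : nat -> R) : Prop :=
  exists t : nat, forall i, (i < n)%nat ->
    mvec n (mpow n A (S t)) x i = mlambda n A * mvec n (mpow n A t) x i.

Definition Circ (n : nat) (a : nat -> R) : nat -> nat -> R :=
  fun i j => a ((j + n - i) mod n)%nat.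

Record interval := Itv { lo : R; hi : R; lo_closed : bool; hi_closed : bool }.

Definition in_itv (I : interval) (a : R) : Prop :=
  (if lo_closed I then lo I <= a else lo I < a) /\
  (if hi_closed I then a <= hi I else a < hi I).

Definition in_IC (n : nat) (I : nat -> interval) (A : nat -> nat -> R) : Prop :=
  exists a : nat -> R, (forall t, (t < n)%nat -> in_itv (I t) (a t)) /\
    (forall i j, (i < n)%nat -> (j < n)%nat -> A i j = Circ n a i j).

Definition ulo (n : nat) (I : nat -> interval) : R := bigmax n (fun k => lo (I k)).
Definition ahat (n : nat) (I : nat -> interval) (i : nat) : R := Rmin (ulo n I) (hi (I i)).
Definition Ahat (n : nat) (I : nat -> interval) : nat -> nat -> R := Circ n (ahat n I).

(* Main.v *)
Require Import Defs.
From Stdlib Require Import Reals Lra Lia List Arith Classical.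
Import ListNotations.
Open Scope R_scope.


Section BM.
Variable f : nat -> R.
Lemma bml_nonneg l : 0 <= fold_right (fun k acc => Rmax (f k) acc) 0 l.
Proof. induction l; simpl; [lra|]. eapply Rle_trans; [exact IHl|apply Rmax_r]. Qed.
Lemma bml_ub l k : In k l -> f k <= fold_right (fun k acc => Rmax (f k) acc) 0 l.
Proof. induction l; simpl; [tauto|]. intros [->|H].
 apply Rmax_l. eapply Rle_trans; [apply IHl; exact H|apply Rmax_r]. Qed.
Lemma bml_lub l c : 0 <= c -> (forall k, In k l -> f k <= c) ->
  fold_right (fun k acc => Rmax (f k) acc) 0 l <= c.
Proof. intros Hc; induction l; simpl; intros H; [lra|]. apply Rmax_lub; auto. Qed.
Lemma bml_att l : l <> [] -> (forall k, In k l -> 0 <= f k) ->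
  exists k, In k l /\ fold_right (fun k acc => Rmax (f k) acc) 0 l = f k.
Proof. induction l as [|a l IH]; intros H0 H; [congruence|]. simpl.
 destruct l as [|b l].
 - exists a; simpl; split; auto. apply Rmax_left. apply H; simpl; auto.
 - destruct IH as [k [Hk Hk2]]. congruence. intros; apply H; simpl; auto.
   rewrite Hk2. destruct (Rle_dec (f a) (f k)).
   + exists k. split. right; exact Hk. apply Rmax_right; auto.
   + exists a. split. left; auto. apply Rmax_left; lra. Qed.
Lemma bml_ext (g : nat -> R) l : (forall k, In k l -> f k = g k) ->
  fold_right (fun k acc => Rmax (f k) acc) 0 l = fold_right (fun k acc => Rmax (g k) acc) 0 l.
Proof. induction l; simpl; intros H; auto. rewrite H, IHl; auto. Qed.
End BM.

Lemma bml_scale (f : nat -> R) c l : 0 <= c ->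
  fold_right (fun k acc => Rmax (c * f k) acc) 0 l = c * fold_right (fun k acc => Rmax (f k) acc) 0 l.
Proof. intros Hc; induction l; simpl. ring. rewrite IHl. apply RmaxRmult; auto. Qed.

Lemma bigmax_nonneg n f : 0 <= bigmax n f.
Proof. apply bml_nonneg. Qed.
Lemma bigmax_ub n f k : (k < n)%nat -> f k <= bigmax n f.
Proof. intros; apply (bml_ub f (seq 0 n)). apply in_seq; lia. Qed.
Lemma bigmax_lub n f c : 0 <= c -> (forall k, (k < n)%nat -> f k <= c) -> bigmax n f <= c.
Proof. intros; apply bml_lub; auto. intros k Hk; apply in_seq in Hk; apply H0; lia. Qed.
Lemma bigmax_att n f : (0 < n)%nat -> (forall k, (k < n)%nat -> 0 <= f k) ->
  exists k, (k < n)%nat /\ bigmax n f = f k.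
Proof. intros Hn H. destruct (bml_att f (seq 0 n)) as [k [Hk E]].
 destruct n; [lia|simpl; congruence]. intros k Hk; apply in_seq in Hk; apply H; lia.
 exists k; split; auto. apply in_seq in Hk; lia. Qed.
Lemma bigmax_ext n f g : (forall k, (k < n)%nat -> f k = g k) -> bigmax n f = bigmax n g.
Proof. intros; apply bml_ext. intros k Hk; apply in_seq in Hk; apply H; lia. Qed.
Lemma bigmax_scale n f c : 0 <= c -> bigmax n (fun k => c * f k) = c * bigmax n f.
Proof. intros; apply bml_scale; auto. Qed.
Lemma bigmax_mono n f g : (forall k, (k < n)%nat -> f k <= g k) -> bigmax n f <= bigmax n g.
Proof. intros H. apply bigmax_lub. apply bigmax_nonneg. intros k Hk.
 eapply Rle_trans; [apply H; auto| apply bigmax_ub; auto]. Qed.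
Lemma bigmax_swap n m (F : nat -> nat -> R) :
  bigmax n (fun j => bigmax m (fun k => F j k)) = bigmax m (fun k => bigmax n (fun j => F j k)).
Proof. apply Rle_antisym; apply bigmax_lub; try apply bigmax_nonneg; intros a Ha;
 apply bigmax_lub; try apply bigmax_nonneg; intros b Hb.
 - eapply Rle_trans; [|apply (bigmax_ub _ _ b); auto]; simpl. apply (bigmax_ub _ (fun j => F j b)); auto.
 - eapply Rle_trans; [|apply (bigmax_ub _ _ b); auto]; simpl. apply (bigmax_ub _ (fun k => F b k)); auto.
Qed.

Definition V n A t x := mvec n (mpow n A t) x.

Lemma V_S n A t x i : (forall k, (k < n)%nat -> 0 <= A i k) -> (forall j, (j < n)%nat -> 0 <= x j) ->
  V n A (S t) x i = bigmax n (fun k => A i k * V n A t x k).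
Proof. intros HA Hx. unfold V, mvec. simpl. unfold mmul.
 transitivity (bigmax n (fun j => bigmax n (fun k => A i k * mpow n A t k j * x j))).
 apply bigmax_ext; intros j Hj. rewrite Rmult_comm, <- bigmax_scale by auto.
 apply bigmax_ext; intros; ring.
 rewrite bigmax_swap. apply bigmax_ext; intros k Hk. rewrite <- bigmax_scale by auto.
 apply bigmax_ext; intros; ring. Qed.

Lemma V_nonneg n A t x i : 0 <= V n A t x i.
Proof. apply bigmax_nonneg. Qed.

Lemma V0 n A y i : (i < n)%nat -> (forall j, (j < n)%nat -> 0 <= y j) -> V n A 0 y i = y i.
Proof. intros Hi Hy. unfold V, mvec; simpl. apply Rle_antisym.
 apply bigmax_lub. auto. intros k Hk. unfold mid. destruct (Nat.eqb_spec i k).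
 subst; lra. rewrite Rmult_0_l; auto.
 replace (y i) with (mid i i * y i) at 1. apply bigmax_ub with (f := fun j => mid i j * y j); auto.
 unfold mid; rewrite Nat.eqb_refl; ring. Qed.

Lemma V_add n A x p q i : (forall i j, (i < n)%nat -> (j < n)%nat -> 0 <= A i j) ->
  (forall j, (j < n)%nat -> 0 <= x j) -> (i < n)%nat ->
  V n A (p + q) x i = V n A p (V n A q x) i.
Proof. intros HA Hx. revert i. induction p; intros i Hi.
 - simpl. rewrite V0; auto. intros; apply V_nonneg.
 - simpl. rewrite !V_S; auto. apply bigmax_ext; intros k Hk. rewrite IHp; auto.
   intros; apply V_nonneg. Qed.

Lemma V_mono n A B x y t i : (forall i j, (i < n)%nat -> (j < n)%nat -> 0 <= A i j <= B i j) ->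
  (forall j, (j < n)%nat -> 0 <= x j <= y j) -> (i < n)%nat ->
  V n A t x i <= V n B t y i.
Proof. intros HA Hx. revert i. induction t; intros i Hi.
 - rewrite (V0 n A x i), (V0 n B y i); auto;
   try (intros j Hj; destruct (Hx j Hj); lra). destruct (Hx i Hi); lra.
 - rewrite !V_S; auto; try (intros j Hj; destruct (Hx j Hj); lra); try (intros j Hj; destruct (HA i j Hi Hj); lra).
   apply bigmax_mono. intros k Hk. apply Rmult_le_compat. apply HA; auto. apply V_nonneg.
   apply HA; auto. apply IHt; auto.
Qed.

Lemma mpow_scale n A A' c t i j : 0 < c -> (forall i j, A i j = c * A' i j) ->
  mpow n A t i j = c ^ t * mpow n A' t i j.
Proof. intros Hc HA. revert i j. induction t; intros i j; simpl. ring.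
 unfold mmul. rewrite <- bigmax_scale. apply bigmax_ext; intros k Hk. rewrite HA, IHt. ring.
 assert (0 < c ^ S t) by (apply pow_lt; lra); simpl in *; lra. Qed.

Lemma V_scale n A A' c t x i : 0 < c -> (forall i j, A i j = c * A' i j) ->
  V n A t x i = c ^ t * V n A' t x i.
Proof. intros Hc HA. unfold V, mvec. rewrite <- bigmax_scale. apply bigmax_ext; intros k Hk.
 rewrite (mpow_scale n A A' c); auto. ring. apply pow_le; lra. Qed.

Lemma stab n B z (Hn : (0 < n)%nat)
  (HB : forall i j, (i < n)%nat -> (j < n)%nat -> 0 <= B i j <= 1)
  (Hz : forall j, (j < n)%nat -> 0 <= z j)
  (Hinc : forall j, (j < n)%nat -> z j <= V n B 1 z j) :
  forall s i, (n <= s)%nat -> (i < n)%nat -> V n B (S s) z i = V n B s z i.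
Proof.
  assert (HB0 : forall i j, (i < n)%nat -> (j < n)%nat -> 0 <= B i j <= B i j).
  { intros i j Hi Hj; destruct (HB i j Hi Hj); lra. }
  set (g := fun s i => V n B s z i).
  assert (M1 : forall s i, (i < n)%nat -> g s i <= g (S s) i).
  { intros s i Hi. unfold g. rewrite <- Nat.add_1_r, V_add; auto.
    2: { intros i0 j Hi0 Hj; destruct (HB i0 j Hi0 Hj); lra. }
    apply V_mono; auto. }
  assert (M2 : forall d s i, (i < n)%nat -> g s i <= g (d + s)%nat i).
  { induction d; intros s i Hi; simpl. lra. eapply Rle_trans; [apply IHd; auto| apply M1; auto]. }
  assert (M3 : forall s s' i, (s <= s')%nat -> (i < n)%nat -> g s i <= g s' i).
  { intros s s' i Hs Hi. replace s' with ((s' - s) + s)%nat by lia. apply M2; auto. }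
  assert (CH : forall s i, (i < n)%nat -> g (S s) i < g (S (S s)) i ->
     exists k, (k < n)%nat /\ g s k < g (S s) k /\ g (S (S s)) i <= g (S s) k).
  { intros s i Hi Hlt.
    assert (E : g (S (S s)) i = bigmax n (fun k => B i k * g (S s) k)).
    { unfold g; apply V_S. intros k Hk; apply HB; auto. exact Hz. }
    destruct (bigmax_att n (fun k => B i k * g (S s) k)) as [k [Hk Ek]]; auto.
    { intros k Hk. apply Rmult_le_pos. apply HB; auto. apply V_nonneg. }
    exists k. split; auto. destruct (HB i k Hi Hk) as [Hb0 Hb1].
    assert (0 <= g (S s) k) by apply V_nonneg.
    split.
    - destruct (Rlt_dec (g s k) (g (S s) k)) as [h|h]; auto. exfalso.
      assert (E2 : g (S s) i = bigmax n (fun k => B i k * g s k)).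
      { unfold g; apply V_S. intros k' Hk'; apply HB; auto. exact Hz. }
      assert (B i k * g s k <= g (S s) i).
      { rewrite E2. apply (bigmax_ub n (fun k => B i k * g s k)); auto. }
      assert (B i k * g (S s) k <= B i k * g s k) by (apply Rmult_le_compat_l; lra).
      lra.
    - rewrite E, Ek. nra. }
  assert (C : forall m s i, (i < n)%nat -> (m <= s)%nat -> g s i < g (S s) i ->
     exists l, length l = S m /\ NoDup l /\ forall k, In k l -> (k < n)%nat /\
        exists s', (s' <= s)%nat /\ g s' k < g (S s') k /\ g (S s) i <= g (S s') k).
  { induction m; intros s i Hi Hms Hd.
    - exists [i]. split; [reflexivity|]. split; [constructor; [simpl; tauto|constructor]|].
      intros k [<-|[]]. split; auto. exists s. split; [lia|]. split; [exact Hd|lra].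
    - destruct s as [|s1]; [lia|].
      destruct (CH s1 i Hi Hd) as [k [Hk [Hd2 Hle]]].
      destruct (IHm s1 k Hk ltac:(lia) Hd2) as [l [Hl1 [Hl2 Hl3]]].
      exists (i :: l). split; simpl; auto. split.
      + constructor; auto. intro Hin. destruct (Hl3 i Hin) as [_ [s' [Hs' [_ Hg]]]].
        assert (g (S s') i <= g (S s1) i) by (apply M3; auto; lia). lra.
      + intros k' [<-|Hk'].
        * split; auto. exists (S s1). split; [lia|]. split; [exact Hd|lra].
        * destruct (Hl3 k' Hk') as [Hk'n [s' [Hs' [Hd' Hg]]]]. split; auto.
          exists s'. split; [lia|]. split; [exact Hd'|lra]. }
  intros s i Hs Hi. apply Rle_antisym; [|apply M1; auto].
  destruct (Rlt_dec (g s i) (g (S s) i)) as [h|h]; [|unfold g in *; lra].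
  exfalso. destruct (C n s i Hi Hs h) as [l [Hl1 [Hl2 Hl3]]].
  assert (length l <= length (seq 0 n))%nat.
  { apply NoDup_incl_length; auto. intros k Hk. apply in_seq. destruct (Hl3 k Hk); lia. }
  rewrite length_seq in H. lia.
Qed.

Lemma main_abs n A' B x (Hn : (0 < n)%nat)
  (HAB : forall i j, (i < n)%nat -> (j < n)%nat -> 0 <= A' i j <= B i j)
  (HB : forall i j, (i < n)%nat -> (j < n)%nat -> B i j <= 1)
  (Hx : forall j, (j < n)%nat -> 0 <= x j)
  (Hret : forall m, exists m', (m <= m')%nat /\ forall i, (i < n)%nat -> x i <= V n A' m' x i)
  (T : nat) (HT : forall i, (i < n)%nat -> V n A' (S T) x i = V n A' T x i) :
  exists t, forall i, (i < n)%nat -> V n B (S t) x i = V n B t x i.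
Proof.
  assert (HA0 : forall i j, (i < n)%nat -> (j < n)%nat -> 0 <= A' i j)
    by (intros i j Hi Hj; apply HAB; auto).
  assert (HBB : forall i j, (i < n)%nat -> (j < n)%nat -> 0 <= B i j <= B i j)
    by (intros i j Hi Hj; destruct (HAB i j Hi Hj); lra).
  assert (HB0 : forall i j, (i < n)%nat -> (j < n)%nat -> 0 <= B i j)
    by (intros i j Hi Hj; destruct (HAB i j Hi Hj); lra).
  set (z := V n A' T x).
  assert (Hz0 : forall j, (j < n)%nat -> 0 <= z j) by (intros; apply V_nonneg).
  assert (Hm : forall d i, (i < n)%nat -> V n A' (d + T) x i = z i).
  { induction d; intros i Hi. reflexivity. simpl.
    rewrite V_S; auto. rewrite <- HT; auto. rewrite V_S; auto.
    apply bigmax_ext; intros k Hk. rewrite IHd; auto. }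
  assert (Hxz : forall j, (j < n)%nat -> x j <= z j).
  { destruct (Hret T) as [m' [Hm' Hr]]. intros j Hj.
    rewrite <- (Hm (m' - T)%nat j Hj). replace (m' - T + T)%nat with m' by lia. auto. }
  assert (Hinc : forall j, (j < n)%nat -> z j <= V n B 1 z j).
  { intros j Hj. unfold z at 1. rewrite <- HT; auto. rewrite <- (Nat.add_1_l T), V_add; auto.
    apply V_mono; auto. intros k Hk; split; [apply V_nonneg| apply Rle_refl]. }
  pose proof (stab n B z Hn (fun i j Hi Hj => conj (HB0 i j Hi Hj) (HB i j Hi Hj)) Hz0 Hinc) as ST.
  assert (ST2 : forall d i, (i < n)%nat -> V n B (d + n) z i = V n B n z i).
  { induction d; intros i Hi. reflexivity. simpl. rewrite ST; auto. lia. }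
  assert (KEY : forall d i, (i < n)%nat -> V n B (d + n + T) x i = V n B n z i).
  { intros d i Hi. apply Rle_antisym.
    - rewrite <- (ST2 (d + T)%nat i Hi). replace (d + T + n)%nat with (d + n + T)%nat by lia.
      apply V_mono; auto; try (intros j Hj; split; auto).
    - rewrite V_add; auto. rewrite <- (ST2 d i Hi). apply V_mono; auto.
      try (intros j Hj; split; [auto|]; apply V_mono; auto; intros k Hk; split; [auto| apply Rle_refl]). }
  exists (n + T)%nat. intros i Hi.
  pose proof (KEY 0%nat i Hi) as K0. pose proof (KEY 1%nat i Hi) as K1. simpl in K0, K1.
  rewrite K0, K1. reflexivity.
Qed.

Lemma mod_sum_lt a b n : (a < n)%nat -> (b < n)%nat ->
  ((a + b) mod n = if (a + b <? n)%nat then a + b else a + b - n)%nat.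
Proof. intros Ha Hb. destruct (Nat.ltb_spec (a+b) n). apply Nat.mod_small; auto.
 replace (a + b)%nat with ((a + b - n) + 1 * n)%nat at 1 by lia.
 rewrite Nat.Div0.mod_add. apply Nat.mod_small. lia. Qed.

Lemma circ_idx n i s : (i < n)%nat -> (s < n)%nat -> ((((i + s) mod n) + n - i) mod n = s)%nat.
Proof. intros Hi Hs. rewrite mod_sum_lt by auto. destruct (Nat.ltb_spec (i+s) n).
 - replace (i + s + n - i)%nat with (s + 1 * n)%nat by lia. rewrite Nat.Div0.mod_add.
   apply Nat.mod_small; auto.
 - replace (i + s - n + n - i)%nat with s by lia. apply Nat.mod_small; auto. Qed.

Definition stp n s0 (p : nat) : nat := ((p + s0) mod n)%nat.

Lemma iter_stp n s0 m p : (0 < n)%nat -> (p < n)%nat ->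
  Nat.iter m (stp n s0) p = ((p + m * s0) mod n)%nat.
Proof. intros Hn Hp. induction m; simpl.
 - rewrite Nat.add_0_r. symmetry; apply Nat.mod_small; auto.
 - rewrite IHm. unfold stp. rewrite Nat.Div0.add_mod_idemp_l. f_equal. lia. Qed.

Lemma iter_lt n s0 m p : (0 < n)%nat -> (p < n)%nat -> (Nat.iter m (stp n s0) p < n)%nat.
Proof. intros. rewrite iter_stp; auto. apply Nat.mod_upper_bound; lia. Qed.

Lemma walk n A' a' s0 y (Hn : (0 < n)%nat) (Hs0 : (s0 < n)%nat)
  (HA : forall i j, (i < n)%nat -> (j < n)%nat -> A' i j = a' ((j + n - i) mod n)%nat)
  (Ha : forall k, (k < n)%nat -> 0 <= a' k) (H1 : a' s0 = 1)
  (Hy : forall j, (j < n)%nat -> 0 <= y j) :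
  forall r i, (i < n)%nat -> y (Nat.iter r (stp n s0) i) <= V n A' r y i.
Proof.
  assert (HA0 : forall i k, (i < n)%nat -> (k < n)%nat -> 0 <= A' i k).
  { intros i k Hi Hk. rewrite HA; auto. apply Ha. apply Nat.mod_upper_bound; lia. }
  induction r; intros i Hi.
  - simpl. rewrite V0; auto. lra.
  - rewrite V_S; auto. rewrite Nat.iter_succ_r.
    assert (Hst : (stp n s0 i < n)%nat) by (apply Nat.mod_upper_bound; lia).
    eapply Rle_trans; [apply (IHr _ Hst)|].
    eapply Rle_trans; [|apply (bigmax_ub n (fun k => A' i k * V n A' r y k) (stp n s0 i)); auto].
    rewrite HA; auto. unfold stp. rewrite circ_idx; auto. rewrite H1. lra.
Qed.

Lemma walk_ret n A' a' s0 y (Hn : (0 < n)%nat) (Hs0 : (s0 < n)%nat)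
  (HA : forall i j, (i < n)%nat -> (j < n)%nat -> A' i j = a' ((j + n - i) mod n)%nat)
  (Ha : forall k, (k < n)%nat -> 0 <= a' k) (H1 : a' s0 = 1)
  (Hy : forall j, (j < n)%nat -> 0 <= y j) :
  forall m, exists m', (m <= m')%nat /\ forall i, (i < n)%nat -> y i <= V n A' m' y i.
Proof. intros m. exists (n * S m)%nat. split. nia.
 intros i Hi. pose proof (walk n A' a' s0 y Hn Hs0 HA Ha H1 Hy (n * S m) i Hi) as W.
 rewrite iter_stp in W; auto.
 replace (i + n * S m * s0)%nat with (i + (S m * s0) * n)%nat in W by lia.
 rewrite Nat.Div0.mod_add, Nat.mod_small in W; auto. Qed.

Lemma words_spec n k l : In l (words n k) <-> (length l = k /\ forall i, In i l -> (i < n)%nat).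
Proof. revert l; induction k; intros l; simpl.
 - split. intros [<-|[]]; simpl; split; auto; tauto.
   intros [Hl _]. destruct l; simpl in *; [auto|lia].
 - rewrite in_flat_map. split.
   + intros [w [Hw Hl]]. apply in_map_iff in Hl. destruct Hl as [i [<- Hi]].
     apply IHk in Hw. destruct Hw as [Hw1 Hw2]. apply in_seq in Hi. simpl. split. lia.
     intros i0 [<-|H]; auto. lia.
   + intros [Hl Hi]. destruct l as [|i w]; simpl in Hl; [lia|]. exists w. split.
     apply IHk. split. lia. intros; apply Hi; simpl; auto.
     apply in_map_iff. exists i. split; auto. apply in_seq. assert (i < n)%nat by (apply Hi; simpl; auto). lia.
Qed.

Lemma path_w_bound n A M first l : (first < n)%nat -> (forall i, In i l -> (i < n)%nat) ->
  (forall i j, (i < n)%nat -> (j < n)%nat -> 0 <= A i j <= M) ->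
  0 <= path_w A first l <= M ^ length l.
Proof. intros Hf. induction l as [|a l IH]; intros Hl HA; simpl. lra.
 destruct l as [|b l].
 - simpl. rewrite Rmult_1_r. apply HA; auto. apply Hl; simpl; auto.
 - destruct IH as [IH1 IH2]. intros i Hi; apply Hl; simpl; auto. auto.
   assert (Hab : 0 <= A a b <= M) by (apply HA; apply Hl; simpl; auto).
   change (path_w A first (a :: b :: l)) with (A a b * path_w A first (b :: l)).
   split. apply Rmult_le_pos; lra. apply Rmult_le_compat; lra.
Qed.

Lemma rpow_inv M k : (1 <= k)%nat -> 0 < M -> Rpower (M ^ k) (/ INR k) = M.
Proof. intros Hk HM. rewrite <- Rpower_pow by auto. rewrite Rpower_mult.
 rewrite Rinv_r. apply Rpower_1; auto. apply not_0_INR; lia. Qed.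

Lemma kroot_le k w M : (1 <= k)%nat -> 0 <= w <= M ^ k -> 0 <= M -> kroot k w <= M.
Proof. intros Hk Hw HM. unfold kroot. destruct (Rle_dec w 0). auto.
 destruct (Req_dec M 0) as [->|HM0].
 - rewrite pow_i in Hw by lia. lra.
 - rewrite <- (rpow_inv M k) by (auto; lra). apply Rle_Rpower_l.
   left; apply Rinv_0_lt_compat, lt_0_INR; lia. lra. Qed.

Lemma kroot_pow k a : (1 <= k)%nat -> 0 < a -> kroot k (a ^ k) = a.
Proof. intros Hk Ha. unfold kroot. destruct (Rle_dec (a ^ k) 0).
 pose proof (pow_lt a k Ha); lra. apply rpow_inv; auto. Qed.

Lemma fr_ub y l : In y l -> y <= fold_right Rmax 0 l.
Proof. induction l; simpl; [tauto|]. intros [<-|H]. apply Rmax_l.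
 eapply Rle_trans; [apply IHl; auto|apply Rmax_r]. Qed.
Lemma fr_lub c l : 0 <= c -> (forall y, In y l -> y <= c) -> fold_right Rmax 0 l <= c.
Proof. intros Hc; induction l; simpl; intros H; auto. apply Rmax_lub; auto. Qed.
Lemma fr_nonneg l : 0 <= fold_right Rmax 0 l.
Proof. induction l; simpl. lra. eapply Rle_trans; [exact IHl|apply Rmax_r]. Qed.

Lemma min_ex (P : nat -> Prop) N : P N -> exists L, P L /\ forall k, (k < L)%nat -> ~ P k.
Proof. induction N as [N IH] using lt_wf_ind. intros HN.
 destruct (classic (exists k, (k < N)%nat /\ P k)) as [[k [Hk Pk]]|H].
 - apply (IH k Hk Pk).
 - exists N. split; auto. intros k Hk Pk. apply H; eauto. Qed.

Fixpoint orb (f : nat -> nat) (p m : nat) : list nat :=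
  match m with O => [] | S m' => p :: orb f (f p) m' end.

Lemma orb_map f p m : orb f p m = map (fun j => Nat.iter j f p) (seq 0 m).
Proof. revert p; induction m; intros p; simpl; auto. f_equal. rewrite IHm.
 rewrite <- seq_shift, map_map. apply map_ext. intros j. rewrite Nat.iter_succ_r. reflexivity. Qed.

Lemma path_w_orb n A f c first : (forall q, (q < n)%nat -> A q (f q) = c) ->
  (forall q, (q < n)%nat -> (f q < n)%nat) ->
  forall m p, (p < n)%nat -> Nat.iter (S m) f p = first -> path_w A first (orb f p (S m)) = c ^ S m.
Proof. intros HA Hf. induction m; intros p Hp Hit.
 - simpl in *. subst. rewrite (HA p Hp). rewrite Rmult_1_r. reflexivity.
 - change (orb f p (S (S m))) with (p :: orb f (f p) (S m)).
   change (path_w A first (p :: orb f (f p) (S m))) with (A p (f p) * path_w A first (orb f (f p) (S m))).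
   rewrite IHm. rewrite HA by auto. simpl; ring. apply Hf; auto. rewrite <- Nat.iter_succ_r. auto. Qed.

Lemma nodupb_ok l : NoDup l -> nodupb l = true.
Proof. induction 1; simpl; auto. rewrite IHNoDup. destruct (existsb (Nat.eqb x) l) eqn:E; auto.
 apply existsb_exists in E. destruct E as [y [Hy Ey]]. apply Nat.eqb_eq in Ey. subst. tauto. Qed.

Lemma NoDup_map_seq (g : nat -> nat) a m :
  (forall i j, (a <= i < a + m)%nat -> (a <= j < a + m)%nat -> g i = g j -> i = j) ->
  NoDup (map g (seq a m)).
Proof. revert a; induction m; intros a H; simpl. constructor. constructor.
 - intro Hin. apply in_map_iff in Hin. destruct Hin as [j [Ej Hj]]. apply in_seq in Hj.
   assert (j = a) by (apply H; lia || auto). lia.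
 - apply IHm. intros i j Hi Hj E. apply H; auto; lia. Qed.

Lemma lam_circ n A a (Hn : (0 < n)%nat)
  (HA : forall i j, (i < n)%nat -> (j < n)%nat -> A i j = a ((j + n - i) mod n)%nat)
  (Ha : forall k, (k < n)%nat -> 0 <= a k) :
  mlambda n A = bigmax n a.
Proof.
  set (M := bigmax n a).
  assert (HAM : forall i j, (i < n)%nat -> (j < n)%nat -> 0 <= A i j <= M).
  { intros i j Hi Hj. rewrite HA; auto. assert (((j + n - i) mod n < n)%nat) by (apply Nat.mod_upper_bound; lia).
    split; auto. apply bigmax_ub; auto. }
  apply Rle_antisym.
  - unfold mlambda. apply fr_lub. apply bigmax_nonneg. intros y Hy.
    apply in_map_iff in Hy. destruct Hy as [c [<- Hc]]. unfold cycles in Hc.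
    apply filter_In in Hc. destruct Hc as [Hc _]. apply in_flat_map in Hc.
    destruct Hc as [k [Hk Hc]]. apply in_seq in Hk. apply words_spec in Hc. destruct Hc as [Hl Hi].
    destruct c as [|i c]; simpl in Hl; [lia|]. apply kroot_le. simpl; lia.
    unfold cycle_w. apply (path_w_bound n); auto. apply Hi; simpl; auto. apply bigmax_nonneg.
  - destruct (bigmax_att n a Hn Ha) as [s0 [Hs0 Es0]]. fold M in Es0.
    destruct (Rle_dec M 0). apply Rle_trans with 0. auto. apply fr_nonneg.
    set (f := stp n s0).
    assert (Hf : forall q, (q < n)%nat -> (f q < n)%nat) by (intros; apply Nat.mod_upper_bound; lia).
    destruct (min_ex (fun k => (0 < k)%nat /\ Nat.iter k f 0%nat = 0%nat) n) as [L [[HL1 HL2] HLm]].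
    { split; auto. unfold f; rewrite iter_stp; auto. replace (0 + n * s0)%nat with (s0 * n)%nat by lia. apply Nat.Div0.mod_mul. }
    assert (HLn : (L <= n)%nat).
    { destruct (Nat.le_gt_cases L n); auto. exfalso. apply (HLm n); auto. split; auto.
      unfold f; rewrite iter_stp; auto. replace (0 + n * s0)%nat with (s0 * n)%nat by lia. apply Nat.Div0.mod_mul. }
    set (c := orb f 0%nat L).
    assert (Hcl : length c = L) by (unfold c; rewrite orb_map, length_map, length_seq; auto).
    assert (Hci : forall i, In i c -> (i < n)%nat).
    { intros i Hi. unfold c in Hi. rewrite orb_map in Hi. apply in_map_iff in Hi.
      destruct Hi as [j [<- _]]. unfold f; apply iter_lt; auto. }
    assert (Hinj : forall i j, (0 <= i < 0 + L)%nat -> (0 <= j < 0 + L)%nat ->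
        Nat.iter i f 0%nat = Nat.iter j f 0%nat -> i = j).
    { assert (K : forall i j, (i < j < L)%nat -> Nat.iter i f 0%nat = Nat.iter j f 0%nat -> False).
      { intros i j Hij E. set (r := (j - i)%nat).
        replace j with (r + i)%nat in E by (unfold r; lia). rewrite Nat.iter_add in E.
        set (q := Nat.iter i f 0%nat) in *. assert (Hq : (q < n)%nat) by (unfold q, f; apply iter_lt; auto).
        unfold f in E. rewrite (iter_stp n s0 r q) in E; auto.
        rewrite <- Nat.Div0.add_mod_idemp_r in E.
        assert (Hw : ((r * s0) mod n < n)%nat) by (apply Nat.mod_upper_bound; lia).
        rewrite mod_sum_lt in E; auto. apply (HLm r). unfold r; lia. split. unfold r; lia.
        unfold f; rewrite iter_stp; auto. simpl.
        destruct (Nat.ltb_spec (q + (r * s0) mod n) n); lia. }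
      intros i j Hi Hj E. destruct (Nat.lt_trichotomy i j) as [h|[h|h]]; auto.
      exfalso; apply (K i j); auto; lia. exfalso; apply (K j i); auto; lia. }
    assert (Hnd : nodupb c = true).
    { apply nodupb_ok. unfold c; rewrite orb_map. apply NoDup_map_seq. exact Hinj. }
    assert (Hcyc : In c (cycles n)).
    { unfold cycles. apply filter_In. split; auto. apply in_flat_map. exists L. split.
      apply in_seq; lia. apply words_spec; auto. }
    assert (Hw : cycle_w A c = M ^ L).
    { destruct L as [|L']; [lia|]. unfold c. simpl orb. unfold cycle_w.
      change (0%nat :: orb f (f 0%nat) L') with (orb f 0%nat (S L')).
      apply (path_w_orb n A f M 0%nat); auto.
      intros q Hq. rewrite HA; auto. unfold f, stp. rewrite circ_idx; auto. }
    unfold mlambda. apply fr_ub. apply in_map_iff. exists c. split; auto.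
    rewrite Hcl, Hw. apply kroot_pow; lra || lia.
Qed.

Lemma itv_bounds J v : in_itv J v -> lo J <= v <= hi J.
Proof. unfold in_itv. destruct (lo_closed J), (hi_closed J); intros [H1 H2]; split; lra. Qed.

Theorem corollary4 (n : nat) (I : nat -> interval) (x : nat -> R)
  (Hn : (0 < n)%nat)
  (Hnonneg : forall t, (t < n)%nat -> 0 <= lo (I t))
  (Hnonempty : forall t, (t < n)%nat -> exists a, in_itv (I t) a)
  (Hx : forall i, (i < n)%nat -> 0 <= x i)
  (Hhat : in_IC n I (Ahat n I)) :
  (exists A, in_IC n I A /\ Attr n A x) <-> Attr n (Ahat n I) x.
Proof.
  split; [|intro H; exists (Ahat n I); split; auto].
  intros [A [[a [Ha HAc]] [T HT]]].
  assert (Hmod : forall t, (t < n)%nat -> ((t + n - 0) mod n = t)%nat).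
  { intros t Ht. replace (t + n - 0)%nat with (t + 1 * n)%nat by lia.
    rewrite Nat.Div0.mod_add. apply Nat.mod_small; auto. }
  set (ah := ahat n I).
  assert (Hah : forall t, (t < n)%nat -> lo (I t) <= ah t <= hi (I t)).
  { destruct Hhat as [c [Hc Hcc]]. intros t Ht.
    assert (E : ah t = c t).
    { pose proof (Hcc 0%nat t Hn Ht) as E. unfold Ahat, Circ in E. rewrite Hmod in E; auto. }
    rewrite E. apply itv_bounds; auto. }
  assert (Ha' : forall t, (t < n)%nat -> lo (I t) <= a t <= hi (I t)) by (intros; apply itv_bounds; auto).
  assert (Ha0 : forall t, (t < n)%nat -> 0 <= a t) by (intros t Ht; pose proof (Ha' t Ht); pose proof (Hnonneg t Ht); lra).
  assert (Hah0 : forall t, (t < n)%nat -> 0 <= ah t) by (intros t Ht; pose proof (Hah t Ht); pose proof (Hnonneg t Ht); lra).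
  assert (HAc' : forall i j, (i < n)%nat -> (j < n)%nat -> A i j = a ((j + n - i) mod n)%nat)
    by (intros; rewrite HAc; auto).
  assert (HAh : forall i j, (i < n)%nat -> (j < n)%nat -> Ahat n I i j = ah ((j + n - i) mod n)%nat)
    by (intros; reflexivity).
  set (M := bigmax n a). set (Mh := bigmax n ah). set (u := ulo n I).
  assert (LA : mlambda n A = M) by (apply (lam_circ n A a); auto).
  assert (LH : mlambda n (Ahat n I) = Mh) by (apply (lam_circ n (Ahat n I) ah); auto).
  assert (HuM : u <= M).
  { apply bigmax_lub. apply bigmax_nonneg. intros k Hk. pose proof (Ha' k Hk).
    pose proof (bigmax_ub n a k Hk). fold M in H0. lra. }
  assert (HMhu : Mh <= u).
  { apply bigmax_lub. apply bigmax_nonneg. intros k Hk. unfold ah, ahat. apply Rmin_l. }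
  assert (Hd : forall i j, (i < n)%nat -> (j < n)%nat -> ((j + n - i) mod n < n)%nat)
    by (intros; apply Nat.mod_upper_bound; lia).
  unfold Attr. rewrite LH.
  destruct (Rle_dec Mh 0) as [HM0|HM0].
  - exists 0%nat. intros i Hi. change (mvec n (mpow n (Ahat n I) 1) x i) with (V n (Ahat n I) 1 x i).
    assert (Mh = 0) by (pose proof (bigmax_nonneg n ah); fold Mh in H; lra).
    rewrite H, Rmult_0_l. apply Rle_antisym; [|apply V_nonneg].
    rewrite V_S; auto. apply bigmax_lub. lra. intros k Hk. rewrite HAh; auto.
    pose proof (bigmax_ub n ah _ (Hd i k Hi Hk)). fold Mh in H0.
    pose proof (Hah0 _ (Hd i k Hi Hk)). assert (ah ((k + n - i) mod n)%nat = 0) by lra.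
    rewrite H2. lra. intros k Hk. rewrite HAh; auto.
  - apply Rnot_le_lt in HM0.
    assert (HM : 0 < M) by lra.
    set (A' := fun i j => A i j / M). set (B := fun i j => Ahat n I i j / Mh).
    assert (SA : forall i j, A i j = M * A' i j) by (intros; unfold A'; field; lra).
    assert (SB : forall i j, Ahat n I i j = Mh * B i j) by (intros; unfold B; field; lra).
    assert (HT' : forall i, (i < n)%nat -> V n A' (S T) x i = V n A' T x i).
    { intros i Hi. pose proof (HT i Hi) as E. rewrite LA in E.
      change (V n A (S T) x i = M * V n A T x i) in E.
      rewrite !(V_scale n A A' M) in E by auto.
      assert (0 < M ^ S T) by (apply pow_lt; auto). simpl in E, H.
      apply (Rmult_eq_reg_l (M * M ^ T)). lra. lra. }
    destruct (bigmax_att n a Hn Ha0) as [s0 [Hs0 Es0]]. fold M in Es0.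
    destruct (main_abs n A' B x Hn) with (T := T) as [t Ht]; auto.
    + intros i j Hi Hj. unfold A', B. rewrite HAc', HAh; auto.
      set (d := ((j + n - i) mod n)%nat). assert (Hdn : (d < n)%nat) by (apply Hd; auto).
      pose proof (Ha' d Hdn). pose proof (Ha0 d Hdn). pose proof (bigmax_ub n a d Hdn). fold M in H1.
      split. apply Rmult_le_pos; auto. left; apply Rinv_0_lt_compat; auto.
      assert (a d * Mh <= ah d * M).
      { unfold ah, ahat. fold u. destruct (Rle_dec u (hi (I d))).
        rewrite Rmin_left by auto. nra. rewrite Rmin_right by lra. nra. }
      replace (a d / M) with (a d * Mh / (M * Mh)) by (field; lra).
      replace (ah d / Mh) with (ah d * M / (M * Mh)) by (field; lra).
      apply Rmult_le_compat_r; auto. left; apply Rinv_0_lt_compat; nra.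
    + intros i j Hi Hj. unfold B. rewrite HAh; auto.
      pose proof (bigmax_ub n ah _ (Hd i j Hi Hj)). fold Mh in H.
      replace 1 with (Mh / Mh) by (field; lra). apply Rmult_le_compat_r; auto.
      left; apply Rinv_0_lt_compat; auto.
    + apply (walk_ret n A' (fun k => a k / M) s0 x Hn Hs0).
      intros i j Hi Hj; unfold A'; rewrite HAc'; auto.
      intros k Hk. apply Rmult_le_pos; auto. left; apply Rinv_0_lt_compat; auto.
      rewrite <- Es0. field; lra. auto.
    + exists t. intros i Hi.
      change (V n (Ahat n I) (S t) x i = Mh * V n (Ahat n I) t x i).
      rewrite !(V_scale n (Ahat n I) B Mh) by auto. rewrite Ht; auto. simpl; ring.
Qed.
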